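(* Let $G=(V,E)$ be a simple undirected graph with $V=\{1,\dots,|V|\}$, and let $t$ be the size of a maximum cut of $G$. Let $k=2|E||V|^2$ and construct the $(2k+|E|)\times 2|V|$ SNP matrix $M$ as follows. The first $k$ rows ($M_0$) consist of $|V|$ blocks of $k/|V|$ rows each; every row of the $j$-th block ($1\le j\le |V|$) has $0$ in columns $2j-1$ and $2j$ and holes everywhere else. The next $k$ rows ($M_1$) are defined identically but with $1$ instead of $0$. The final $|E|$ rows ($M_G$) correspond to the edges: for an edge $\{i,j\}$ with $i<j$, the row has $0$ in columns $2i-1,2i$, has $1$ in columns $2j-1,2j$, and for every $c\notin\{i,j\}$ has $0$ in column $2c-1$ and $1$ in column $2c$. Then $M$ is ungapped and $$\mathrm{Ungapped\text{-}MEC}(M)=|E|(|V|-2)+2(|E|-t).$$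
   Context: An SNP matrix is a matrix with entries in $\{0,1,-\}$, `-' being a hole. For $X\in\{0,1,-\}^m$, $Y\in\{0,1\}^m$, $d(X,Y)$ counts positions where one is 0 and the other 1 (holes do not count). A matrix is feasible if there exist $H_1,H_2\in\{0,1\}^m$ such that every row $r$ satisfies $d(r,H_1)=0$ or $d(r,H_2)=0$. A flip changes a 0 entry to 1 or a 1 entry to 0 (never to or from a hole). A matrix is ungapped if in every row all holes occur at the start or end of the row. $\mathrm{Ungapped\text{-}MEC}(M)$ is the minimum number of flips needed to make $M$ feasible. *)

(* Defs.v *)
From mathcomp Require Import all_boot all_order.
Set Implicit Arguments. Unset Strict Implicit. Unset Printing Implicit Defensive.

(* An SNP row of length m: entries Some false (0), Some true (1), None (hole). *)
Definition snp_row (m : nat) := {ffun 'I_m -> option bool}.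
Definition snp_matrix (m : nat) := seq (snp_row m).

Section SNP.
Variable m : nat.

Definition snp_dist (r : snp_row m) (h : 'I_m -> bool) : nat :=
  #|[set i : 'I_m | if r i is Some b then b != h i else false]|.

Definition feasible (M : snp_matrix m) : Prop :=
  exists H1 H2 : 'I_m -> bool,
    forall r, r \in M -> snp_dist r H1 = 0 \/ snp_dist r H2 = 0.

Definition ungapped (M : snp_matrix m) : Prop :=
  forall r, r \in M -> forall a b c : 'I_m, (a <= b)%N -> (b <= c)%N ->
    r a != None -> r c != None -> r b != None.

Definition row_flips (r r' : snp_row m) : nat := #|[set i : 'I_m | r i != r' i]|.

Definition flips_to (M M' : snp_matrix m) (f : nat) : Prop :=
  all2 (fun r r' : snp_row m => [forall i, (r i == None) == (r' i == None)]) M M'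
  /\ f = sumn [seq row_flips p.1 p.2 | p <- zip M M'].

Definition ungapped_MEC_is (M : snp_matrix m) (v : nat) : Prop :=
  (exists M', flips_to M M' v /\ feasible M') /\
  (forall M' f, flips_to M M' f -> feasible M' -> (v <= f)%N).
End SNP.

(* Graphs on V = 'I_n (vertex j here is vertex j+1 of the paper), edge relation e. *)
Section Reduction.
Variables (n : nat) (e : rel 'I_n).

Definition edge_pred : pred ('I_n * 'I_n) := [pred p : 'I_n * 'I_n | (p.1 < p.2)%N && e p.1 p.2].
Definition num_edges : nat := #|[set p | edge_pred p]|.

Definition cut_size (S : {set 'I_n}) : nat :=
  #|[set p | edge_pred p && ((p.1 \in S) != (p.2 \in S))]|.
Definition max_cut : nat := \max_(S : {set 'I_n}) cut_size S.

Definition kk : nat := 2 * num_edges * n ^ 2.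

(* Column c : 'I_(2n) (0-based) corresponds to paper column c+1; it belongs to
   vertex c./2 (paper vertex c./2 + 1); paper columns 2j-1,2j are our 2(j-1),2(j-1)+1. *)
Definition block_row (b : bool) (j : 'I_n) : snp_row (2 * n) :=
  [ffun c : 'I_(2 * n) => if (c./2 == j)%N then Some b else None].

Definition edge_row (i j : 'I_n) : snp_row (2 * n) :=
  [ffun c : 'I_(2 * n) =>
     if (c./2 == i)%N then Some false
     else if (c./2 == j)%N then Some true
     else Some (odd c)].

Definition M_block (b : bool) : snp_matrix (2 * n) :=
  flatten [seq nseq (kk %/ n) (block_row b j) | j <- enum 'I_n].

Definition M_G : snp_matrix (2 * n) :=
  [seq edge_row p.1 p.2 | p <- enum edge_pred].

Definition reduction_matrix : snp_matrix (2 * n) :=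
  M_block false ++ M_block true ++ M_G.
End Reduction.

(* Main.v *)
Require Import Defs.
From mathcomp Require Import all_boot all_order.
From mathcomp Require Import zify.
Set Implicit Arguments. Unset Strict Implicit. Unset Printing Implicit Defensive.

Section Gen.
Variable m : nat.
Implicit Types (r : snp_row m) (H : 'I_m -> bool) (M : snp_matrix m).

Definition cost H1 H2 M := \sum_(r <- M) minn (snp_dist r H1) (snp_dist r H2).

Lemma dist_tri r r' H : snp_dist r H <= row_flips r r' + snp_dist r' H.
Proof.
rewrite /snp_dist /row_flips.
set A := [set i | _]; set B := [set i | r i != r' i]; set C := [set i | _].
apply: (leq_trans _ (leq_card_setU B C)).
apply: subset_leq_card; apply/subsetP => i; rewrite !inE.
case E: (r i) => [b|] //= hb.
case E': (r' i) => [b'|] /=; last by [].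
case: (eqVneq b b') => [<-|]; first by rewrite hb orbT.
by move=> ne; apply/orP; left.
Qed.

Lemma flips_ge M M' f H1 H2 : flips_to M M' f ->
  (forall r, r \in M' -> snp_dist r H1 = 0 \/ snp_dist r H2 = 0) ->
  cost H1 H2 M <= f.
Proof.
case=> + ->; elim: M M' => [|r M IH] [|r' M'] //=.
  by rewrite /cost big_nil.
move=> /andP[_ hall] hf.
rewrite /cost big_cons.
apply: leq_add.
  have := hf r' (mem_head _ _); case=> h0.
    by apply: leq_trans (geq_minl _ _) _; have := dist_tri r r' H1; rewrite h0 addn0.
  by apply: leq_trans (geq_minr _ _) _; have := dist_tri r r' H2; rewrite h0 addn0.
apply: IH => // x hx; apply: hf; by rewrite in_cons hx orbT.
Qed.

Definition fill r H : snp_row m := [ffun i => if r i is Some _ then Some (H i) else None].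

Lemma fill_flips r H : row_flips r (fill r H) = snp_dist r H.
Proof.
rewrite /row_flips /snp_dist; apply: eq_card => i; rewrite !inE ffunE.
by case: (r i).
Qed.

Lemma fill_dist r H : snp_dist (fill r H) H = 0.
Proof.
apply/eqP; rewrite cards_eq0; apply/eqP/setP => i; rewrite !inE ffunE.
by case: (r i) => //= _; rewrite eqxx.
Qed.

Definition choose_fill H1 H2 r := fill r (if snp_dist r H1 <= snp_dist r H2 then H1 else H2).

Lemma upper M H1 H2 : exists M', flips_to M M' (cost H1 H2 M) /\ feasible M'.
Proof.
exists (map (choose_fill H1 H2) M); split; last first.
  exists H1, H2 => r /mapP[r0 _ ->]; rewrite /choose_fill.
  by case: ifP => _; [left|right]; rewrite fill_dist.
split.
  elim: M => //= r M ->; rewrite andbT; apply/forallP => i.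
  rewrite /choose_fill ffunE; by case: (r i).
elim: M => [|r M IH] /=; first by rewrite /cost big_nil.
rewrite /cost big_cons -/(cost H1 H2 M) IH; congr (_ + _).
rewrite /choose_fill; case: ifP => h; rewrite fill_flips.
  by rewrite (minn_idPl h).
rewrite (minn_idPr _) //; by rewrite ltnW // ltnNge h.
Qed.

Lemma mec_of M v :
  (exists H1 H2, cost H1 H2 M = v) -> (forall H1 H2, v <= cost H1 H2 M) ->
  ungapped_MEC_is M v.
Proof.
move=> [H1 [H2 <-]] hlow; split; first exact: upper.
move=> M' f hf [G1 [G2 hG]]; apply: leq_trans (hlow G1 G2) _.
exact: flips_ge hf hG.
Qed.
End Gen.
Section Enc.
Variable n : nat.

Lemma enc_proof (p : 'I_n * bool) : p.2 + (p.1 : nat).*2 < 2 * n.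
Proof. case: p => [[v hv] b] /=; rewrite -muln2; case: b => /=; lia. Qed.
Definition enc (p : 'I_n * bool) : 'I_(2 * n) := Ordinal (enc_proof p).

Lemma dec_proof (c : 'I_(2 * n)) : (c : nat)./2 < n.
Proof.
case: c => c hc /=. have := odd_double_half c. rewrite -muln2. case: (odd c) => /=; lia.
Qed.
Definition dec (c : 'I_(2 * n)) : 'I_n * bool := (Ordinal (dec_proof c), odd c).

Lemma enc_half p : (enc p : nat)./2 = p.1.
Proof. by rewrite /= half_bit_double. Qed.
Lemma enc_odd p : odd (enc p) = p.2.
Proof. case: p => v [] /=; by rewrite ?oddS ?odd_double. Qed.

Lemma decK : cancel dec enc.
Proof. move=> c; apply: val_inj => /=; exact: odd_double_half. Qed.
Lemma encK : cancel enc dec.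
Proof.
move=> p; case: p => v b; rewrite /dec; congr (_, _); last exact: enc_odd.
apply: val_inj => /=; exact: half_bit_double.
Qed.

Definition mis (m : nat) (r : snp_row m) (H : 'I_m -> bool) (c : 'I_m) : nat :=
  if r c is Some b then b != H c else false.

Lemma dist_decomp (r : snp_row (2 * n)) H :
  snp_dist r H = \sum_(v : 'I_n) (mis r H (enc (v, false)) + mis r H (enc (v, true))).
Proof.
rewrite /snp_dist -sum1_card (big_mkcond (fun i => i \in _)) /=.
rewrite (eq_bigr (mis r H)); last first.
  by move=> i _; rewrite inE /mis; case: (r i) => // b; case: (b != H i).
rewrite (reindex enc) /=; last by exists dec => x _; [apply: encK | apply: decK].
rewrite [RHS](eq_bigr (fun v => \sum_(b : bool) mis r H (enc (v, b)))); last first.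
  by move=> v _; rewrite big_bool addnC.
by rewrite pair_big /=; apply: eq_bigr => -[v b].
Qed.
End Enc.

Section Red.
Variables (n : nat) (e : rel 'I_n).
Local Notation E := (num_edges e).

Lemma block_enc b (j v : 'I_n) b' : block_row b j (enc (v, b')) = if v == j then Some b else None.
Proof. by rewrite ffunE enc_half. Qed.

Lemma edge_enc (i j v : 'I_n) b : edge_row i j (enc (v, b)) =
  if v == i then Some false else if v == j then Some true else Some b.
Proof. by rewrite ffunE enc_half enc_odd. Qed.

Lemma block_dist b (j : 'I_n) (H : 'I_(2 * n) -> bool) : snp_dist (block_row b j) H =
  (b != H (enc (j, false))) + (b != H (enc (j, true))).
Proof.
rewrite dist_decomp (bigD1 j) //= big1 ?addn0; first by rewrite /mis !block_enc eqxx.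
by move=> v hv; rewrite /mis !block_enc (negbTE hv).
Qed.

Lemma sum3 (F : 'I_n -> nat) i j : i != j -> (forall v, v != i -> v != j -> F v = 1) ->
  \sum_v F v = F i + F j + (n - 2).
Proof.
move=> hij hF.
have hn : \sum_(v : 'I_n) 1 = n by rewrite sum_nat_const card_ord muln1.
have hji : j != i by rewrite eq_sym.
move: hn; rewrite (bigD1 i) // (bigD1 j) //= => hn.
rewrite (bigD1 i) // (bigD1 j) //=.
rewrite (eq_bigr (fun _ => 1)); last by move=> v /andP[h1 h2]; apply: hF.
lia.
Qed.

Lemma edge_dist (H : 'I_(2 * n) -> bool) (s : 'I_n -> bool) (i j : 'I_n) : i != j -> (forall v b, H (enc (v, b)) = s v) ->
  snp_dist (edge_row i j) H = 2 * s i + 2 * ~~ s j + (n - 2).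
Proof.
move=> hij hH; rewrite dist_decomp.
rewrite (eq_bigr (fun v => if v == i then 2 * s i else if v == j then 2 * ~~ s j else 1)); last first.
  move=> v _; rewrite /mis !edge_enc !hH.
  case: eqP => [->|_]; first by case: (s i).
  case: eqP => [->|_]; first by case: (s j).
  by case: (s v).
have hji : j != i by rewrite eq_sym.
rewrite (sum3 hij); last by move=> v h1 h2; rewrite (negbTE h1) (negbTE h2).
by rewrite eqxx (negbTE hji) eqxx.
Qed.

Lemma cost_G (H1 H2 : 'I_(2 * n) -> bool) (s : 'I_n -> bool) :
  (forall v b, H1 (enc (v, b)) = s v) -> (forall v b, H2 (enc (v, b)) = ~~ s v) ->
  cost H1 H2 (M_G e) = E * (n - 2) + 2 * (E - cut_size e [set v | s v]).
Proof.
move=> h1 h2; rewrite /cost /M_G big_map big_enum /=.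
have hs2 : forall v b, H2 (enc (v, b)) = (fun v => ~~ s v) v by [].
rewrite (eq_bigr (fun p => (n - 2) + 2 * ~~ ((p.1 \in [set v | s v]) != (p.2 \in [set v | s v])))); last first.
  move=> p hp; have hne : p.1 != p.2.
    by apply/eqP => eq; move: hp; rewrite inE /= eq ltnn.
  rewrite (edge_dist hne h1) (edge_dist hne hs2) !inE negbK.
  by case: (s p.1); case: (s p.2) => /=; lia.
rewrite big_split /= sum_nat_const.
have hE : E = #|edge_pred e| by rewrite /num_edges; apply: eq_card => p; rewrite inE.
have hcut : cut_size e [set v | s v] = \sum_(p in edge_pred e) ((p.1 \in [set v | s v]) != (p.2 \in [set v | s v])).
  rewrite /cut_size -sum1_card big_mkcond [RHS]big_mkcond /=; apply: eq_bigr => p _; rewrite !inE.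
  have -> : edge_pred e p = (p.1 < p.2) && e p.1 p.2 by []. by case: ((p.1 < p.2) && e p.1 p.2); case: (s p.1 != s p.2).
have hsum : \sum_(p in edge_pred e) (~~ ((p.1 \in [set v | s v]) != (p.2 \in [set v | s v])) : nat)
   + cut_size e [set v | s v] = E.
  rewrite hcut -big_split /= hE -sum1_card; apply: eq_bigr => p _; by case: (_ != _).
rewrite -big_distrr /= -hE mulnC.
by rewrite -hsum addnK.
Qed.

Lemma cost_block (H1 H2 : 'I_(2 * n) -> bool) b : cost H1 H2 (M_block e b) =
  \sum_(j : 'I_n) minn (snp_dist (block_row b j) H1) (snp_dist (block_row b j) H2) * (kk e %/ n).
Proof.
rewrite /cost /M_block big_flatten big_map big_enum /=; apply: eq_bigr => j _.
by rewrite big_nseq iter_addn_0.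
Qed.

Lemma cost_red (H1 H2 : 'I_(2 * n) -> bool) : cost H1 H2 (reduction_matrix e) =
  cost H1 H2 (M_block e false) + cost H1 H2 (M_block e true) + cost H1 H2 (M_G e).
Proof. rewrite /cost /reduction_matrix !big_cat /=; exact: addnA. Qed.

Definition goodv (H1 H2 : 'I_(2 * n) -> bool) (j : 'I_n) :=
  [&& H1 (enc (j, true)) == H1 (enc (j, false)),
      H2 (enc (j, false)) == ~~ H1 (enc (j, false)) &
      H2 (enc (j, true)) == ~~ H1 (enc (j, false))].

Lemma bad_block (H1 H2 : 'I_(2 * n) -> bool) j : ~~ goodv H1 H2 j ->
  exists b, 0 < minn (snp_dist (block_row b j) H1) (snp_dist (block_row b j) H2).
Proof.
move=> hb.
suff [b hb2] : exists b, 0 < minn ((b != H1 (enc (j, false))) + (b != H1 (enc (j, true))))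
  ((b != H2 (enc (j, false))) + (b != H2 (enc (j, true)))).
  by exists b; rewrite !block_dist.
move: hb; rewrite /goodv.
case: (H1 (enc (j, true))); case: (H1 (enc (j, false)));
case: (H2 (enc (j, true))); case: (H2 (enc (j, false))) => //= _;
by [exists false | exists true].
Qed.

Lemma lower (H1 H2 : 'I_(2 * n) -> bool) :
  E * (n - 2) + 2 * (E - max_cut e) <= cost H1 H2 (reduction_matrix e).
Proof.
rewrite cost_red.
case: (posnP E) => [E0 | Epos].
  by rewrite E0 mul0n sub0n muln0.
have [p _] : exists p, p \in [set p | edge_pred e p] by apply/card_gt0P.
have npos : 0 < n by apply: leq_ltn_trans (leq0n _) (ltn_ord p.1).
have hK : kk e %/ n = 2 * E * n by rewrite /kk expnS expn1 mulnA mulnK.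
have hv : E * (n - 2) + 2 * (E - max_cut e) <= 2 * E * n.
  have : E * (n - 2) + 2 * E <= 2 * E * n by nia.
  lia.
case: (boolP [forall j, goodv H1 H2 j]) => [/forallP allg | /forallPn [j bad]].
  pose s v := H1 (enc (v, false)).
  have h1 : forall v b, H1 (enc (v, b)) = s v.
    move=> v [] //; by have /and3P[/eqP -> _ _] := allg v.
  have h2 : forall v b, H2 (enc (v, b)) = ~~ s v.
    by move=> v []; have /and3P[_ /eqP h2f /eqP h2t] := allg v.
  rewrite (cost_G h1 h2).
  have : cut_size e [set v | s v] <= max_cut e by apply: leq_bigmax.
  lia.
have [b hb] := bad_block bad.
have : kk e %/ n <= cost H1 H2 (M_block e b).
  rewrite cost_block (bigD1 j) //=; apply: leq_trans (leq_addr _ _).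
  by rewrite leq_pmull.
rewrite hK; case: b {hb} => /=; lia.
Qed.

Lemma upper_ex : exists H1 H2 : 'I_(2 * n) -> bool,
  cost H1 H2 (reduction_matrix e) = E * (n - 2) + 2 * (E - max_cut e).
Proof.
have [S hS] : {S : {set 'I_n} | max_cut e = cut_size e S}.
  by apply: eq_bigmax; apply/card_gt0P; exists set0.
pose H1 := fun c : 'I_(2 * n) => (dec c).1 \in S.
pose H2 := fun c => ~~ H1 c.
have h1 : forall v b, H1 (enc (v, b)) = (fun v => v \in S) v by move=> v b; rewrite /H1 encK.
have h2 : forall v b, H2 (enc (v, b)) = ~~ (fun v => v \in S) v by move=> v b; rewrite /H2 h1.
exists H1, H2; rewrite cost_red (cost_G h1 h2) !cost_block !big1 ?add0n.
- have -> : [set v | v \in S] = S by apply/setP => v; rewrite inE.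
  by rewrite hS.
- move=> j _; rewrite !block_dist !h1 !h2 /=.
  by case: (j \in S).
- move=> j _; rewrite !block_dist !h1 !h2 /=.
  by case: (j \in S).
Qed.

Lemma ungapped_red : ungapped (reduction_matrix e).
Proof.
move=> r; rewrite !mem_cat => hr a b c hab hbc.
case/or3P: hr => [hr|hr|/mapP[p _ ->]]; last first.
  have hs : forall x, edge_row p.1 p.2 x != None by move=> x; rewrite /edge_row ffunE; by case: ifP => _ //; case: ifP.
  by rewrite hs.
all: case/flattenP: hr => s /mapP[j _ ->]; rewrite mem_nseq => /andP[_ /eqP ->].
all: rewrite /block_row !ffunE.
all: case: ifP => ha; last by [].
all: case: ifP => hc; last by [].
all: case: ifP => hb // _ _.
all: move/eqP: ha; move/eqP: hc; move/negbT/eqP: hb.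
all: have := half_leq hab; have := half_leq hbc; lia.
Qed.
End Red.

Theorem mainTheorem2 (n : nat) (e : rel 'I_n) :
  symmetric e -> irreflexive e ->
  ungapped (reduction_matrix e) /\
  ungapped_MEC_is (reduction_matrix e)
    (num_edges e * (n - 2) + 2 * (num_edges e - max_cut e)).
Proof.
move=> _ _; split; first exact: ungapped_red.
apply: mec_of; first exact: upper_ex.
exact: lower.
Qed.
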